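(* For every integer $n\ge1$, the number of permutations $\pi\in S_n$ whose number of alignments equals $(k-1)(n-k)$, where $k$ is the number of weak excedences of $\pi$ (i.e. which have the maximal number of alignments given their number of weak excedences), is the Catalan number $C_n=\frac1n\binom{2n}{n+1}$.
   Context: Place $1,\dots,n$ clockwise on a circle. Distinct $p_1,\dots,p_m$ are in clockwise cyclic order if $(p_2-p_1)\bmod n<\dots<(p_m-p_1)\bmod n$ (residues in $\{0,\dots,n-1\}$). For $\pi\in S_n$ (fixed points regarded as ''counterclockwise loops''), an ordered pair $(i,j)$, $i\ne j$, is aligned if $\pi(j)\ne j$, the entries of $(i,\pi(i),\pi(j),j)$ are pairwise distinct except that possibly $i=\pi(i)$, and the distinct entries in this order are in clockwise cyclic order. An alignment is an unordered pair $\{i,j\}$ with $(i,j)$ or $(j,i)$ aligned. A weak excedence of $\pi$ is an $i$ with $\pi(i)\ge i$. For a permutation with $k$ weak excedences, $(k-1)(n-k)$ is the maximum possible number of alignments. *)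

(* Defs.v *)
(* Points 1..n of the circle are represented by 'I_n = {0..n-1}
   (shift by one; this preserves cyclic order and weak excedences). *)
From mathcomp Require Import all_boot all_fingroup.
Set Implicit Arguments. Unset Strict Implicit. Unset Printing Implicit Defensive.

Section Align.
Variable n : nat.

Definition cdist (a b : 'I_n) : nat := (b + n - a) %% n.

(* distinct p1,...,pm in clockwise cyclic order:
   (p2-p1) mod n < ... < (pm-p1) mod n *)
Definition cyc_order (s : seq 'I_n) : bool :=
  match s with
  | [::] => true
  | p1 :: t => sorted ltn [seq cdist p1 p | p <- t]
  end.

(* the list of distinct entries of (i, pi i, pi j, j), where i = pi i is allowed *)
Definition align_entries (pi : {perm 'I_n}) (i j : 'I_n) : seq 'I_n :=
  if pi i == i then [:: i; pi j; j] else [:: i; pi i; pi j; j].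

Definition aligned (pi : {perm 'I_n}) (i j : 'I_n) : bool :=
  [&& i != j, pi j != j, uniq (align_entries pi i j)
    & cyc_order (align_entries pi i j)].

(* number of alignments: unordered pairs {i,j} (counted once via i < j) *)
Definition nalign (pi : {perm 'I_n}) : nat :=
  #|[set p : 'I_n * 'I_n | (p.1 < p.2)%N && (aligned pi p.1 p.2 || aligned pi p.2 p.1)]|.

Definition wex (pi : {perm 'I_n}) : nat := #|[set i : 'I_n | (i <= pi i)%N]|.

End Align.

(* Main.v *)
Require Import Defs.
From mathcomp Require Import all_boot all_fingroup.
From mathcomp Require Import zify.
Set Implicit Arguments. Unset Strict Implicit. Unset Printing Implicit Defensive.

Definition lal (i j pi pj : nat) : bool :=
  ((j < i) && (pi < pj) && ((i <= pi) == (j <= pj)))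
  || (~~ (j <= pj) && (i <= pi) && ((j < i) || (pi < pj))).
Definition Lsum n (f : nat -> nat) :=
  \sum_(0 <= i < n) \sum_(0 <= j < n) (lal i j (f i) (f j) : nat).
Definition Ksum n (f : nat -> nat) := \sum_(0 <= i < n) ((i <= f i) : nat).
Definition insf (f : nat -> nat) t n x := if x == t then n else if x == n then f t else f x.

Lemma sum_delta n t (a : nat) : t < n ->
  \sum_(0 <= i < n) (if i == t then a else 0) = a.
Proof.
elim: n => [//|n IH] ht.
rewrite big_nat_recr //=.
case: (ltnP t n) => h.
  by rewrite IH // (_ : (n == t) = false) ?addn0 //; apply/eqP; lia.
have -> : t = n by lia.
rewrite eqxx big_nat_cond big1 ?add0n // => i /andP[/andP[_ hi] _].
by rewrite (_ : (i == n) = false) //; apply/eqP; lia.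
Qed.

Lemma sum_const1 n : \sum_(0 <= i < n) 1 = n.
Proof. by rewrite big_const_nat iter_addn_0 subn0 mul1n. Qed.

Lemma eq_sum_nat n (F G : nat -> nat) :
  (forall i, i < n -> F i = G i) -> \sum_(0 <= i < n) F i = \sum_(0 <= i < n) G i.
Proof. by move=> h; apply: eq_big_nat => i /andP[_ hi]; apply: h. Qed.

Lemma sum2_rowcol n t (X Y : nat -> nat -> nat) : t < n ->
  (forall i j, i < n -> j < n -> i != t -> j != t -> X i j = Y i j) ->
  X t t = 0 -> Y t t = 0 ->
  \sum_(0 <= i < n) \sum_(0 <= j < n) X i j
    + \sum_(0 <= j < n) Y t j + \sum_(0 <= i < n) Y i t
  = \sum_(0 <= i < n) \sum_(0 <= j < n) Y i j
    + \sum_(0 <= j < n) X t j + \sum_(0 <= i < n) X i t.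
Proof.
move=> ht hXY hX hY.
have row (Z : nat -> nat -> nat) : \sum_(0 <= j < n) Z t j =
   \sum_(0 <= i < n) \sum_(0 <= j < n) (if i == t then Z i j else 0).
  rewrite -(sum_delta (\sum_(0 <= j < n) Z t j) ht).
  apply: eq_sum_nat => i _; case: eqP => [->|_] //.
  by rewrite big1.
have col (Z : nat -> nat -> nat) : \sum_(0 <= i < n) Z i t =
   \sum_(0 <= i < n) \sum_(0 <= j < n) (if j == t then Z i j else 0).
  apply: eq_sum_nat => i _.
  rewrite (eq_sum_nat (G := fun j => if j == t then Z i t else 0)) ?sum_delta //.
  by move=> j _; case: eqP => [->|].
rewrite (row Y) (col Y) (row X) (col X).
have sp (A B : nat -> nat -> nat) : \sum_(0 <= i < n) \sum_(0 <= j < n) A i j +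
   \sum_(0 <= i < n) \sum_(0 <= j < n) B i j =
   \sum_(0 <= i < n) \sum_(0 <= j < n) (A i j + B i j).
  rewrite -big_split; apply: eq_sum_nat => i _; by rewrite -big_split.
rewrite !sp; apply: eq_sum_nat => i hi; apply: eq_sum_nat => j hj.
case: (i =P t) => [->|/eqP hi']; case: (j =P t) => [->|/eqP hj']; rewrite ?eqxx /=.
all: try (rewrite (negbTE hi')). all: try (rewrite (negbTE hj')).
all: rewrite ?hX ?hY /=; try lia.
rewrite hXY //.
Qed.

Lemma Lsum_ins n f t : (forall x, x < n -> f x < n) ->
  (forall x y, x < n -> y < n -> (f x == f y) = (x == y)) -> t < n ->
  Lsum n.+1 (insf f t n) + \sum_(0 <= j < n) (lal t j (f t) (f j) : nat)
    + \sum_(0 <= i < n) (lal i t (f i) (f t) : nat)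
  = Lsum n f + \sum_(0 <= j < n) ((f j < j) && (j < t) : nat)
    + \sum_(0 <= i < n) ((t < i) && (i <= f i) : nat)
    + \sum_(0 <= i < n) ((i <= f i) && (f i < f t) : nat)
    + \sum_(0 <= j < n) ((f t < f j) && (f j < j) : nat).
Proof.
move=> fn finj ht.
set b := f t; set g := insf f t n.
have hb : b < n by apply: fn.
have gn : g n = b by rewrite /g /insf (_ : (n == t) = false) ?eqxx //; apply/eqP; lia.
have gi i : i < n -> g i = if i == t then n else f i.
  by move=> hi; rewrite /g /insf (_ : (i == n) = false) //; apply/eqP; lia.
have fb i : i < n -> (f i == b) = (i == t) by move=> hi; rewrite /b finj.
have E : Lsum n.+1 g =
   \sum_(0 <= i < n) \sum_(0 <= j < n) (lal i j (g i) (g j) : nat)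
   + \sum_(0 <= i < n) (lal i n (g i) b : nat)
   + \sum_(0 <= j < n) (lal n j b (g j) : nat).
  rewrite /Lsum big_nat_recr //= big_nat_recr //= gn.
  have -> : (lal n n b b : nat) = 0 by rewrite /lal; lia.
  rewrite addn0; congr (_ + _).
  rewrite -big_split; apply: eq_sum_nat => i hi; by rewrite big_nat_recr //= gn.
have hX : (lal t t (g t) (g t) : nat) = 0 by rewrite /lal; lia.
have hY : (lal t t (f t) (f t) : nat) = 0 by rewrite /lal; lia.
have hXY : forall i j, i < n -> j < n -> i != t -> j != t ->
   (lal i j (g i) (g j) : nat) = (lal i j (f i) (f j) : nat).
  by move=> i j hi hj hit hjt; rewrite !gi // (negbTE hit) (negbTE hjt).
have R := @sum2_rowcol n t (fun i j => (lal i j (g i) (g j) : nat))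
                         (fun i j => (lal i j (f i) (f j) : nat)) ht hXY hX hY.
rewrite /= in R.
have RX : \sum_(0 <= j < n) (lal t j (g t) (g j) : nat) =
          \sum_(0 <= j < n) ((f j < j) && (j < t) : nat).
  apply: eq_sum_nat => j hj; rewrite !gi // eqxx.
  have fj := fn j hj; have fbj := fb j hj.
  case: (j =P t) => [jt|/eqP jt].
    by rewrite jt ?eqxx /lal; lia.
  rewrite (negbTE jt) in fbj *; rewrite /lal; lia.
have CX : \sum_(0 <= i < n) (lal i t (g i) (g t) : nat) =
          \sum_(0 <= i < n) ((t < i) && (i <= f i) : nat).
  apply: eq_sum_nat => j hj; rewrite !gi // eqxx.
  have fj := fn j hj; have fbj := fb j hj.
  case: (j =P t) => [jt|/eqP jt].
    by rewrite jt ?eqxx /lal; lia.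
  rewrite (negbTE jt) in fbj *; rewrite /lal; lia.
have E1 : \sum_(0 <= i < n) (lal i n (g i) b : nat) =
          \sum_(0 <= i < n) ((i <= f i) && (f i < b) : nat).
  apply: eq_sum_nat => j hj; rewrite !gi //.
  have fj := fn j hj; have fbj := fb j hj.
  case: (j =P t) => [jt|/eqP jt].
    by rewrite jt ?eqxx /lal; lia.
  rewrite (negbTE jt) in fbj *; rewrite /lal; lia.
have E2 : \sum_(0 <= j < n) (lal n j b (g j) : nat) =
          \sum_(0 <= j < n) ((b < f j) && (f j < j) : nat).
  apply: eq_sum_nat => j hj; rewrite !gi //.
  have fj := fn j hj; have fbj := fb j hj.
  case: (j =P t) => [jt|/eqP jt].
    by rewrite jt ?eqxx /lal; lia.
  rewrite (negbTE jt) in fbj *; rewrite /lal; lia.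
rewrite E; rewrite -/b in R; rewrite /Lsum in R *; lia.
Qed.

Lemma sum_widen t n (F : nat -> nat) : t <= n ->
  \sum_(0 <= o < t) F o = \sum_(0 <= o < n) (if o < t then F o else 0).
Proof.
move=> htn; rewrite [in RHS](big_cat_nat _ (n := t)) //=.
have -> : \sum_(t <= o < n) (if o < t then F o else 0) = 0.
  rewrite big_nat_cond big1 // => i /andP[/andP[h _] _]; by rewrite ltnNge h.
rewrite addn0; by apply: eq_big_nat => i /andP[_ ->].
Qed.

Lemma sum_split3 n (A B C : nat -> nat) :
  \sum_(0 <= i < n) (A i + B i + C i) =
  \sum_(0 <= i < n) A i + \sum_(0 <= i < n) B i + \sum_(0 <= i < n) C i.
Proof. by rewrite !big_split. Qed.

Definition Xc (f : nat -> nat) t := \sum_(0 <= o < t) ((o <= f o) && (f t < f o) : nat).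

Lemma NK n f : Ksum n f + \sum_(0 <= i < n) ((f i < i) : nat) = n.
Proof.
rewrite /Ksum -big_split /=; rewrite -[RHS]sum_const1; apply: eq_sum_nat => i _; lia.
Qed.

Lemma Ksum_ins n f t : (forall x, x < n -> f x < n) -> t < n ->
  Ksum n.+1 (insf f t n) = Ksum n f + (f t < t).
Proof.
move=> fn ht; rewrite /Ksum big_nat_recr //=.
have -> : insf f t n n = f t.
  by rewrite /insf (_ : (n == t) = false) ?eqxx //; apply/eqP; lia.
have := fn t ht => hb.
rewrite (_ : (n <= f t) = false) ?addn0; last by lia.
rewrite -(sum_delta (f t < t) ht) -big_split /=; apply: eq_sum_nat => i hi.
rewrite /insf (_ : (i == n) = false); last by apply/eqP; lia.
case: (i =P t) => [->|_]; lia.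
Qed.

Lemma Ksum_ins_max n f : Ksum n.+1 (insf f n n) = (Ksum n f).+1.
Proof.
rewrite /Ksum big_nat_recr //= /insf eqxx leqnn addn1; congr _.+1.
apply: eq_sum_nat => i hi; rewrite (_ : (i == n) = false) //; apply/eqP; lia.
Qed.

Lemma Lsum_ins_max n f : (forall x, x < n -> f x < n) ->
  Lsum n.+1 (insf f n n) = Lsum n f + \sum_(0 <= i < n) ((f i < i) : nat).
Proof.
move=> fn.
have gi i : i < n -> insf f n n i = f i.
  by move=> hi; rewrite /insf (_ : (i == n) = false) //; apply/eqP; lia.
have gn : insf f n n n = n by rewrite /insf eqxx.
rewrite /Lsum big_nat_recr //= big_nat_recr //= gn.
have -> : (lal n n n n : nat) = 0 by rewrite /lal; lia.
rewrite addn0; congr (_ + _).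
  apply: eq_sum_nat => i hi; rewrite big_nat_recr //= gn gi //.
  rewrite (_ : (lal i n (f i) n : nat) = 0) ?addn0; last by have := fn i hi; rewrite /lal; lia.
  by apply: eq_sum_nat => j hj; rewrite !gi.
apply: eq_sum_nat => j hj; rewrite gi //; have := fn j hj; rewrite /lal; lia.
Qed.

Lemma Lsum_ins_wex n f t : (forall x, x < n -> f x < n) ->
  (forall x y, x < n -> y < n -> (f x == f y) = (x == y)) -> t < n -> t <= f t ->
  Lsum n.+1 (insf f t n) + 2 * Xc f t = Lsum n f + (Ksum n f).-1.
Proof.
move=> fn finj ht htb.
have H := Lsum_ins fn finj ht.
have hb := fn t ht.
rewrite /Xc (sum_widen _ (ltnW ht)).
set K' := \sum_(0 <= i < n) ((i <= f i) && (i != t) : nat).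
have HK : Ksum n f = K' + 1.
  rewrite /Ksum /K' -(sum_delta 1 ht) -big_split /=; apply: eq_sum_nat => i hi.
  by case: (i =P t) => [->|/eqP it]; rewrite ?eqxx ?(negbTE it) /=; lia.
have P : \sum_(0 <= j < n) (lal t j (f t) (f j) : nat)
    + \sum_(0 <= i < n) (lal i t (f i) (f t) : nat) + K'
  = \sum_(0 <= j < n) ((f j < j) && (j < t) : nat)
    + \sum_(0 <= i < n) ((t < i) && (i <= f i) : nat)
    + \sum_(0 <= i < n) ((i <= f i) && (f i < f t) : nat)
    + \sum_(0 <= j < n) ((f t < f j) && (f j < j) : nat)
    + 2 * \sum_(0 <= o < n) (if o < t then ((o <= f o) && (f t < f o) : nat) else 0).
  rewrite /K' -!big_split /= big_distrr /= -big_split /=.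
  apply: eq_sum_nat => i hi.
  have fi := fn i hi; have fbi := finj i t hi ht.
  case: (i =P t) => [it|/eqP it].
    by rewrite it ltnn /lal; lia.
  rewrite (negbTE it) in fbi; rewrite /lal; case: ifP; lia.
rewrite HK; lia.
Qed.

Lemma Lsum_ins_nwex n f t : (forall x, x < n -> f x < n) ->
  (forall x y, x < n -> y < n -> (f x == f y) = (x == y)) -> t < n -> f t < t ->
  Lsum n.+1 (insf f t n) + 1
    + 2 * \sum_(0 <= i < n) ((t < i) && (f i < i) && (f i < f t) : nat)
  = Lsum n f + (n - Ksum n f).
Proof.
move=> fn finj ht htb.
have H := Lsum_ins fn finj ht.
have hb := fn t ht.
have HN := NK n f.
have P : \sum_(0 <= j < n) ((f j < j) && (j < t) : nat)
    + \sum_(0 <= i < n) ((t < i) && (i <= f i) : nat)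
    + \sum_(0 <= i < n) ((i <= f i) && (f i < f t) : nat)
    + \sum_(0 <= j < n) ((f t < f j) && (f j < j) : nat)
    + \sum_(0 <= i < n) (if i == t then 1 else 0)
    + 2 * \sum_(0 <= i < n) ((t < i) && (f i < i) && (f i < f t) : nat)
  = \sum_(0 <= j < n) (lal t j (f t) (f j) : nat)
    + \sum_(0 <= i < n) (lal i t (f i) (f t) : nat)
    + \sum_(0 <= i < n) ((f i < i) : nat).
  rewrite big_distrr /= -!big_split /=.
  apply: eq_sum_nat => i hi.
  have fi := fn i hi; have fbi := finj i t hi ht.
  case: (i =P t) => [it|/eqP it].
    by rewrite it /lal; lia.
  rewrite (negbTE it) in fbi; rewrite /lal; lia.
rewrite sum_delta // in P; lia.
Qed.

Lemma cdistE n (a b : 'I_n) : cdist a b = if a <= b then b - a else b + n - a.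
Proof.
rewrite /cdist; have ha := ltn_ord a; have hb := ltn_ord b.
case: leqP => h.
  rewrite (_ : b + n - a = (b - a) + n); last by lia.
  by rewrite modnDr modn_small //; lia.
by rewrite modn_small //; lia.
Qed.

Lemma aligned_lal n (s : {perm 'I_n}) (i j : 'I_n) : aligned s i j = lal i j (s i) (s j).
Proof.
have key : (i == j) = (s i == s j) by rewrite (inj_eq (@perm_inj _ s)).
rewrite /aligned /align_entries.
move: key (ltn_ord i) (ltn_ord j) (ltn_ord (s i)) (ltn_ord (s j)).
move: (s i) (s j) => pi pj.
case: ifP => /= hpi; rewrite !inE /= !andbT !cdistE; move: hpi;
  rewrite -!val_eqE /=; move: (val i) (val j) (val pi) (val pj) => I J P Q.
- move=> /eqP -> key hI hJ hP hQ; rewrite /lal; repeat case: ifP => ?; lia.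
- move=> /negbT hp key hI hJ hP hQ; rewrite /lal; repeat case: ifP => ?; lia.
Qed.


Definition pf n (s : {perm 'I_n}) (x : nat) : nat :=
  if (insub x : option 'I_n) is Some i then nat_of_ord (s i) else x.

Lemma pfE n (s : {perm 'I_n}) (i : 'I_n) : pf s i = s i.
Proof. by rewrite /pf valK. Qed.

Lemma pf_lt n (s : {perm 'I_n}) x : x < n -> pf s x < n.
Proof. by move=> hx; rewrite /pf insubT. Qed.

Lemma pf_inj n (s : {perm 'I_n}) x y : x < n -> y < n -> (pf s x == pf s y) = (x == y).
Proof.
move=> hx hy; rewrite /pf !insubT /=.
by rewrite val_eqE (inj_eq (@perm_inj _ s)) -val_eqE.
Qed.

Lemma lal_irr I J P Q : (I == J) = (P == Q) -> lal I J P Q -> I != J.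
Proof. rewrite /lal; lia. Qed.

Lemma lal_asym I J P Q : (I == J) = (P == Q) -> lal I J P Q -> lal J I Q P = false.
Proof. rewrite /lal; lia. Qed.

Lemma nalign_Lsum n (s : {perm 'I_n}) : nalign s = Lsum n (pf s).
Proof.
rewrite /nalign -sum1dep_card big_mkcond /=.
rewrite -(pair_bigA _ (fun i j : 'I_n => if (i < j) && (aligned s i j || aligned s j i) then 1 else 0)) /=.
have key (i j : 'I_n) : (nat_of_ord i == j) = (nat_of_ord (s i) == s j).
  by rewrite !val_eqE (inj_eq (@perm_inj _ s)).
have E1 : \sum_(i : 'I_n) \sum_(j : 'I_n) (lal i j (s i) (s j) : nat) =
   \sum_(i : 'I_n) \sum_(j : 'I_n) ((i < j) && lal i j (s i) (s j) : nat) +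
   \sum_(i : 'I_n) \sum_(j : 'I_n) ((i < j) && lal j i (s j) (s i) : nat).
  rewrite [X in _ = _ + X]exchange_big /= -big_split /=; apply: eq_bigr => i _.
  rewrite -big_split /=; apply: eq_bigr => j _.
  have := key i j; rewrite /lal; lia.
have E2 : Lsum n (pf s) = \sum_(i : 'I_n) \sum_(j : 'I_n) (lal i j (s i) (s j) : nat).
  rewrite /Lsum big_mkord; apply: eq_bigr => i _; rewrite big_mkord; apply: eq_bigr => j _.
  by rewrite !pfE.
rewrite E2 E1 -big_split /=; apply: eq_bigr => i _; rewrite -big_split /=; apply: eq_bigr => j _.
rewrite !aligned_lal; have := key i j; rewrite /lal; case: ifP; lia.
Qed.

Lemma wex_Ksum n (s : {perm 'I_n}) : wex s = Ksum n (pf s).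
Proof.
rewrite /wex -sum1dep_card big_mkcond /= /Ksum big_mkord; apply: eq_bigr => i _.
by rewrite pfE; case: leqP.
Qed.



Definition ins n (s : {perm 'I_n}) (t : 'I_n.+1) : {perm 'I_n.+1} :=
  tperm t ord_max * lift_perm ord_max ord_max s.

Lemma ext_val n (s : {perm 'I_n}) (y : 'I_n.+1) :
  nat_of_ord (lift_perm ord_max ord_max s y) = if nat_of_ord y == n then n else pf s y.
Proof.
case: (unliftP ord_max y) => [k ->|->]; last by rewrite lift_perm_id /= eqxx.
have lv (j : 'I_n) : nat_of_ord (lift ord_max j) = j.
  by rewrite /= /bump leqNgt ltn_ord.
rewrite lift_perm_lift !lv.
have hk : k < n := ltn_ord k.
by rewrite ltn_eqF // pfE.
Qed.

Lemma pf_ins n (s : {perm 'I_n}) (t : 'I_n.+1) x :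
  pf (ins s t) x = insf (pf s) t n x.
Proof.
rewrite /insf; case: (ltnP x n.+1) => hx; last first.
  have h1 : (insub x : option 'I_n.+1) = None by rewrite insubF // ltnNge hx.
  have h2 : (insub x : option 'I_n) = None by rewrite insubF // ltnNge ltnW.
  rewrite /pf h1 h2.
  rewrite (_ : (x == t) = false); last by apply/eqP; have := ltn_ord t; lia.
  by rewrite (_ : (x == n) = false) //; apply/eqP; lia.
have -> : x = nat_of_ord (Ordinal hx) by [].
rewrite pfE /ins permM ext_val.
set X := Ordinal hx.
case: tpermP => [e|e|h1 h2] /=.
- have ext : x = t by rewrite -e.
  by rewrite eqxx ext eqxx.
- have exn : x = n by rewrite -[x]/(nat_of_ord X) e.
  by rewrite exn eqxx eq_sym; case: eqP => [->|].
- have h1' : (x == t) = false by apply/eqP => h; apply: h1; apply: val_inj; exact: h.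
  have h2' : (x == n) = false by apply/eqP => h; apply: h2; apply: val_inj; exact: h.
  by rewrite h1' h2'.
Qed.

Lemma ins_t n (s : {perm 'I_n}) (t : 'I_n.+1) : ins s t t = ord_max.
Proof. by rewrite /ins permM tpermL lift_perm_id. Qed.

Lemma ins_inj n : injective (fun st : {perm 'I_n} * 'I_n.+1 => ins st.1 st.2).
Proof.
move=> [s1 t1] [s2 t2] /= E.
have et : t1 = t2.
  apply: (@perm_inj _ (ins s2 t2)); by rewrite ins_t -E ins_t.
subst t2; congr (_, _).
move: E; rewrite /ins => /mulgI E.
apply/permP => k; apply: (@lift_inj _ ord_max).
by rewrite -!(@lift_perm_lift n ord_max ord_max) E.
Qed.

Lemma ins_bij n : bijective (fun st : {perm 'I_n} * 'I_n.+1 => ins st.1 st.2).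
Proof.
apply: inj_card_bij; first exact: ins_inj.
by rewrite card_prod !card_Sn card_ord factS mulnC.
Qed.

Lemma count_ins n (P : {perm 'I_n.+1} -> bool) :
  \sum_(p : {perm 'I_n.+1}) (P p : nat) =
  \sum_(s : {perm 'I_n}) \sum_(t : 'I_n.+1) (P (ins s t) : nat).
Proof.
rewrite (reindex (fun st : {perm 'I_n} * 'I_n.+1 => ins st.1 st.2)) /=; last first.
  exact: onW_bij (ins_bij n).
by rewrite -(pair_bigA _ (fun s t => (P (ins s t) : nat))).
Qed.

Lemma ins_surj n (p : {perm 'I_n.+1}) : exists s t, p = ins s t.
Proof.
case: (ins_bij n) => g h1 h2.
by exists (g p).1, (g p).2; rewrite h2.
Qed.



Definition validb (f : nat -> nat) t := (t <= f t) && (Xc f t == 0).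
Definition Vsum n f := \sum_(0 <= t < n) (validb f t : nat).

Lemma Xc_ext f g t : (forall o, o <= t -> f o = g o) -> Xc f t = Xc g t.
Proof.
move=> E; rewrite /Xc E //; apply: eq_big_nat => o /andP[_ ho].
by rewrite E // ltnW.
Qed.

Lemma term_le_sum (F : nat -> nat) o s : o < s -> F o <= \sum_(0 <= i < s) F i.
Proof.
move=> hos; rewrite (big_cat_nat _ (n := o)) //= ?(ltnW hos) //.
rewrite [X in _ <= _ + X]big_ltn //=; lia.
Qed.

Lemma Vsum_ins_max n f : (forall x, x < n -> f x < n) ->
  Vsum n.+1 (insf f n n) = (Vsum n f).+1.
Proof.
move=> fn; rewrite /Vsum big_nat_recr //=.
have -> : (validb (insf f n n) n : nat) = 1.
  rewrite /validb /insf eqxx leqnn /= /Xc.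
  rewrite big_nat_cond big1 // => o /andP[/andP[_ ho] _].
  rewrite (_ : (o == n) = false); last by apply/eqP; lia.
  rewrite eqxx; have := fn o ho; lia.
rewrite addn1; congr _.+1.
apply: eq_sum_nat => s hs; rewrite /validb.
rewrite (@Xc_ext (insf f n n) f) => [|o ho]; last first.
  by rewrite /insf (_ : (o == n) = false) //; apply/eqP; lia.
by rewrite /insf (_ : (s == n) = false) //; apply/eqP; lia.
Qed.

Lemma Vsum_ins n f t : (forall x, x < n -> f x < n) -> t < n -> validb f t ->
  Vsum n.+1 (insf f t n) = \sum_(0 <= s < t.+1) (validb f s : nat).
Proof.
move=> fn ht hv; rewrite /Vsum big_nat_recr //=.
have gn : insf f t n n = f t.
  by rewrite /insf (_ : (n == t) = false) ?eqxx //; apply/eqP; lia.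
have gi i : i < n -> insf f t n i = if i == t then n else f i.
  by move=> hi; rewrite /insf (_ : (i == n) = false) //; apply/eqP; lia.
rewrite {2}/validb gn (_ : (n <= f t) = false) ?addn0; last by have := fn t ht; lia.
rewrite (sum_widen _ ht); apply: eq_sum_nat => s hs.
have git i : i < n -> i != t -> insf f t n i = f i.
  by move=> hi hit; rewrite gi // (negbTE hit).
case: (ltngtP s t) => hst.
- have -> : s < t.+1 by lia.
  have XE : Xc (insf f t n) s = Xc f s.
    apply: Xc_ext => o ho; apply: git; lia.
  by rewrite /validb XE git //; lia.
- have -> : (s < t.+1) = false by lia.
  have pos : 0 < Xc (insf f t n) s.
    apply: (@leq_trans (((t <= insf f t n t) && (insf f t n s < insf f t n t)) : nat)).
      rewrite gi // eqxx git //; last by lia.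
      by have := fn s hs; lia.
    exact: (term_le_sum (fun o => ((o <= insf f t n o) && (insf f t n s < insf f t n o)) : nat) hst).
  by rewrite /validb (_ : (Xc (insf f t n) s == 0) = false) ?andbF //; lia.
- subst s; rewrite ltnSn hv /validb gi // eqxx.
  have -> : Xc (insf f t n) t = 0.
    rewrite /Xc big_nat_cond big1 // => o /andP[/andP[_ ho] _].
    have ho' : o != t by lia.
    rewrite (git o (ltn_trans ho ht) ho') (gi t ht) eqxx.
    have := fn o (ltn_trans ho ht); lia.
  by rewrite eqxx; lia.
Qed.

Lemma rank_count n (P : nat -> bool) h :
  \sum_(0 <= t < n) (P t && (\sum_(0 <= s < t.+1) (P s : nat) == h) : nat)
  = ((0 < h) && (h <= \sum_(0 <= s < n) (P s : nat)) : nat).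
Proof.
elim: n => [|n IH]; first by rewrite !big_geq //; lia.
rewrite big_nat_recr //= IH.
rewrite (big_nat_recr n 0 (fun s => (P s : nat))) //=.
set c := \sum_(0 <= s < n) (P s : nat).
case: (P n) => /=; lia.
Qed.



Definition M n k := k.-1 * (n - k).
Definition good n (p : {perm 'I_n}) := Lsum n (pf p) == M n (Ksum n (pf p)).

Lemma Lsum_ext n f g : (forall x, f x = g x) -> Lsum n f = Lsum n g.
Proof.
by move=> E; rewrite /Lsum; apply: eq_sum_nat => i _; apply: eq_sum_nat => j _; rewrite !E.
Qed.

Lemma Ksum_ext n f g : (forall x, f x = g x) -> Ksum n f = Ksum n g.
Proof. by move=> E; rewrite /Ksum; apply: eq_sum_nat => i _; rewrite E. Qed.

Lemma Vsum_ext n f g : (forall x, f x = g x) -> Vsum n f = Vsum n g.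
Proof.
move=> E; rewrite /Vsum; apply: eq_sum_nat => i _.
by rewrite /validb (@Xc_ext f g) ?E.
Qed.

Lemma Kpos n f : 0 < n -> 0 < Ksum n f.
Proof.
move=> hn; apply: (@leq_trans ((0 <= f 0) : nat)) => //.
exact: (term_le_sum (fun i => ((i <= f i) : nat)) hn).
Qed.

Lemma Kle n f : Ksum n f <= n.
Proof. have := NK n f; lia. Qed.

Lemma Vle n f : Vsum n f <= n.
Proof.
rewrite /Vsum -[X in _ <= X]sum_const1; apply: leq_sum => i _; by case: (validb _ _).
Qed.

Lemma Vpos n f : 0 < n -> 0 < Vsum n f.
Proof.
move=> hn; apply: (@leq_trans (validb f 0 : nat)).
  by rewrite /validb /Xc big_geq.
exact: (term_le_sum (fun i => (validb f i : nat)) hn).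
Qed.

Lemma ins_facts n (s : {perm 'I_n}) (t : 'I_n.+1) :
  [/\ nat_of_ord t = n ->
        Lsum n.+1 (pf (ins s t)) = Lsum n (pf s) + (n - Ksum n (pf s))
        /\ Ksum n.+1 (pf (ins s t)) = (Ksum n (pf s)).+1,
      t < n -> t <= pf s t ->
        Lsum n.+1 (pf (ins s t)) + 2 * Xc (pf s) t = Lsum n (pf s) + (Ksum n (pf s)).-1
        /\ Ksum n.+1 (pf (ins s t)) = Ksum n (pf s)
    & t < n -> pf s t < t -> exists Y,
        Lsum n.+1 (pf (ins s t)) + 1 + 2 * Y = Lsum n (pf s) + (n - Ksum n (pf s))
        /\ Ksum n.+1 (pf (ins s t)) = (Ksum n (pf s)).+1].
Proof.
rewrite (Lsum_ext _ (pf_ins s t)) (Ksum_ext _ (pf_ins s t)).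
have fn := @pf_lt n s; have finj := @pf_inj n s.
split.
- move=> ->; rewrite Lsum_ins_max // Ksum_ins_max; split => //.
  by have := NK n (pf s); lia.
- move=> ht htb; rewrite Lsum_ins_wex // Ksum_ins //; split => //.
  by rewrite (_ : (pf s t < t) = false) ?addn0 //; lia.
- move=> ht htb; eexists; split; first exact: Lsum_ins_nwex.
  by rewrite Ksum_ins // htb addn1.
Qed.

Lemma M_max n K : (0 < n -> 0 < K) -> K <= n -> M n.+1 K.+1 = M n K + (n - K).
Proof.
rewrite /M => h1 h2; case: K h1 h2 => [|K] h1 h2 /=.
  by case: n h1 h2 => //= n /(_ isT).
rewrite subSS; nia.
Qed.

Lemma M_wex n K : 0 < K -> K <= n -> M n.+1 K = M n K + K.-1.
Proof. rewrite /M => h1 h2; case: K h1 h2 => [|K] //= _ h2; rewrite subSn //; nia. Qed.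

Lemma M_nwex n K : 0 < K -> K <= n -> M n.+1 K.+1 = M n K + (n - K).
Proof. rewrite /M => h1 h2; case: K h1 h2 => [|K] //= _ h2; rewrite subSS; nia. Qed.

Lemma bound n (p : {perm 'I_n}) : Lsum n (pf p) <= M n (Ksum n (pf p)).
Proof.
elim: n p => [p|n IH p]; first by rewrite /Lsum big_geq.
case: (ins_surj p) => s [t ->].
have IHs := IH s.
have hK := Kle n (pf s).
have hKp := @Kpos n (pf s).
case: (ins_facts s t) => HA HB HC.
case: (ltnP t n) => ht.
- case: (leqP t (pf s t)) => htb.
  + case: (HB ht htb) => E1 ->.
    have hK0 : 0 < Ksum n (pf s) by apply: hKp; lia.
    rewrite M_wex //; lia.
  + case: (HC ht htb) => Y [E1 ->].
    have hK0 : 0 < Ksum n (pf s) by apply: hKp; lia.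
    rewrite M_nwex //; lia.
- have tn : nat_of_ord t = n by have := ltn_ord t; lia.
  case: (HA tn) => E1 ->; rewrite M_max //; lia.
Qed.

Lemma good_ins n (s : {perm 'I_n}) (t : 'I_n.+1) :
  good (ins s t) = good s && ((nat_of_ord t == n) || validb (pf s) t).
Proof.
rewrite /good /validb.
have IHs := bound s.
have hK := Kle n (pf s).
have hKp := @Kpos n (pf s).
case: (ins_facts s t) => HA HB HC.
case: (ltnP t n) => ht.
- have tn : (nat_of_ord t == n) = false by lia.
  rewrite tn /=.
  case: (leqP t (pf s t)) => htb.
  + case: (HB ht htb) => E1 ->.
    have hK0 : 0 < Ksum n (pf s) by apply: hKp; lia.
    rewrite M_wex //; lia.
  + case: (HC ht htb) => Y [E1 ->].
    have hK0 : 0 < Ksum n (pf s) by apply: hKp; lia.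
    rewrite M_nwex //; lia.
- have tn : nat_of_ord t = n by have := ltn_ord t; lia.
  case: (HA tn) => E1 ->; rewrite M_max // tn eqxx /=; lia.
Qed.



Definition gc n h := \sum_(p : {perm 'I_n}) (good p && (Vsum n (pf p) == h) : nat).
Definition Tc n h := \sum_(p : {perm 'I_n}) (good p && (h <= Vsum n (pf p)) : nat).

Lemma gc_rec n h : gc n.+1 h =
  \sum_(s : {perm 'I_n}) (good s && ((Vsum n (pf s)).+1 == h) : nat) +
  \sum_(s : {perm 'I_n}) (good s && (0 < h) && (h <= Vsum n (pf s)) : nat).
Proof.
rewrite /gc count_ins -big_split; apply: eq_bigr => s _ /=.
rewrite big_ord_recr /= addnC; congr (_ + _).
  rewrite good_ins (Vsum_ext _ (pf_ins s ord_max)) /= eqxx /= Vsum_ins_max //.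
    by rewrite andbT.
  exact: (@pf_lt n s).
case: (boolP (good s)) => gs /=; last first.
  by rewrite big1 // => i _; rewrite good_ins (negbTE gs).
rewrite [in RHS]/Vsum -(rank_count n (validb (pf s)) h) big_mkord.
apply: eq_bigr => i _.
rewrite good_ins gs /= (_ : (nat_of_ord (widen_ord (leqnSn n) i) == n) = false) /=; last first.
  by have := ltn_ord i; lia.
case: (boolP (validb (pf s) i)) => hv //=.
rewrite (Vsum_ext _ (pf_ins s _)) /= Vsum_ins //; exact: (@pf_lt n s).
Qed.

Lemma gc_rec1 n h : 0 < h -> gc n.+1 h = gc n h.-1 + Tc n h.
Proof.
move=> hh; rewrite gc_rec /gc /Tc; congr (_ + _); apply: eq_bigr => s _.
  by rewrite (_ : ((Vsum n (pf s)).+1 == h) = (Vsum n (pf s) == h.-1)) //; lia.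
by rewrite hh andbT.
Qed.

Lemma gc_rec0 n : gc n.+1 0 = 0.
Proof.
rewrite gc_rec !big1 // => s _; by rewrite ?andbF.
Qed.

Lemma Tc_split n h : Tc n h = gc n h + Tc n h.+1.
Proof.
rewrite /Tc /gc -big_split; apply: eq_bigr => s _ /=.
case: (good s) => //=; lia.
Qed.

Lemma gc_big n h : n < h -> gc n h = 0.
Proof.
move=> hn; rewrite /gc big1 // => p _.
have := Vle n (pf p); case: (good p) => //=; lia.
Qed.

Lemma gc_tele n h : 0 < h -> gc n.+1 h = gc n.+1 h.+1 + gc n h.-1.
Proof.
move=> hh; rewrite !gc_rec1 // Tc_split /=; lia.
Qed.

Lemma gc00 : gc 0 0 = 1.
Proof.
rewrite /gc (eq_bigr (fun _ => 1)); first by rewrite sum1_card card_Sn.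
move=> p _; rewrite /good /Lsum /Ksum /Vsum !big_geq //.
Qed.

Lemma gcn0 n : 0 < n -> gc n 0 = 0.
Proof. by case: n => // n _; exact: gc_rec0. Qed.



Lemma gc_closed n h : 0 < h <= n ->
  gc n h + 'C(2 * n - h - 1, n) = 'C(2 * n - h - 1, n.-1).
Proof.
elim: n h => [|n IH]; first by move=> h hh; lia.
have gnn : gc n n = 1.
  case: n IH => [|m] IH; first exact: gc00.
  have := IH m.+1 ltac:(lia).
  rewrite (_ : 2 * m.+1 - m.+1 - 1 = m) /=; last lia.
  rewrite binn bin_small //; lia.
have main : forall k h, n.+1 - h = k -> 0 < h <= n.+1 ->
   gc n.+1 h + 'C(2 * n.+1 - h - 1, n.+1) = 'C(2 * n.+1 - h - 1, n.+1.-1).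
  elim => [|k IHk] h hk hh'.
    have eh : h = n.+1 by lia.
    subst h; rewrite gc_tele // gc_big // gnn.
    rewrite (_ : 2 * n.+1 - n.+1 - 1 = n) /=; last lia.
    rewrite binn bin_small //; lia.
  have IHk' := IHk h.+1 (_ : n.+1 - h.+1 = k) _; rewrite gc_tele; last lia.
  case: n IH gnn IHk IHk' hk hh' => [|m] IH gnn IHk IHk' hk hh'; first by lia.
  set a := 2 * m.+1 - h.
  have e1 : 2 * m.+2 - h - 1 = a.+1 by rewrite /a; lia.
  have e2 : 2 * m.+2 - h.+1 - 1 = a by rewrite /a; lia.
  have {IHk'} IHk' := IHk' ltac:(lia) ltac:(lia).
  rewrite e2 /= in IHk'; rewrite e1 /=.
  rewrite (binS a m.+1) (binS a m).
  case: (ltngtP h 1) => h1; first by lia.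
  - have IHn := IH h.-1 ltac:(lia).
    rewrite (_ : 2 * m.+1 - h.-1 - 1 = a) /= in IHn; last by rewrite /a; lia.
    lia.
  - subst h; rewrite gcn0 //.
    have ea : a = (2 * m).+1 by rewrite /a; lia.
    have sym : 'C(a, m) = 'C(a, m.+1).
      rewrite -(@bin_sub a m); last lia.
      by rewrite (_ : a - m = m.+1) //; lia.
    lia.
move=> h hh; exact: (main (n.+1 - h) h erefl hh).
Qed.

Theorem mainTheorem15 (n : nat) : (1 <= n)%N ->
  #|[set pi : {perm 'I_n} | nalign pi == ((wex pi).-1 * (n - wex pi))%N]|
  = ('C(n.*2, n.+1) %/ n)%N.
Proof.
move=> hn.
have E : #|[set pi : {perm 'I_n} | nalign pi == ((wex pi).-1 * (n - wex pi))%N]|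
    = \sum_(p : {perm 'I_n}) (good p : nat).
  rewrite -sum1dep_card big_mkcond; apply: eq_bigr => p _.
  by rewrite nalign_Lsum wex_Ksum /good /M; case: ifP.
have E2 : \sum_(p : {perm 'I_n}) (good p : nat) = gc n.+1 1.
  rewrite gc_rec1 // gcn0 // add0n /Tc; apply: eq_bigr => p _.
  by have := Vpos (pf p) hn; case: (good p) => //=; lia.
have C := @gc_closed n.+1 1 ltac:(lia).
rewrite (_ : 2 * n.+1 - 1 - 1 = n.*2) /= in C; last by rewrite -mul2n; lia.
have B := mul_bin_left n.*2 n.
rewrite (_ : n.*2 - n = n) in B; last by rewrite -mul2n; lia.
have H : 'C(n.*2, n.+1) = gc n.+1 1 * n.
  have := congr1 (muln^~ n) C; rewrite /=; nia.
by rewrite E E2 H mulnK.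
Qed.
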